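(* Let $S$ be an atom-simple Stone relation algebra with finitely many atoms, and let $C : S\to\mathbb{N}$ map each $x$ to the number of atoms below $x$. Assume that for all $x\in S$, $C(x)=0\iff x=\bot$, and that $C(\top)=C(1)^2$. Then $S$ is atomic and atom-rectangular, and hence $S$ is a representable relation algebra.
   Context: A Stone relation algebra is a structure $(S,\sqcup,\sqcap,\cdot,\overline{\,\cdot\,},{}^{\smile},\bot,\top,1)$ (write $xy$ for $x\cdot y$, $\overline{x}$ for the pseudocomplement, $x^{\smile}$ for the converse) such that: $(S,\sqcup,\sqcap,\bot,\top)$ is a bounded distributive lattice with order $x\sqsubseteq y\iff x\sqcup y=y$; $x\sqcap y=\bot\iff x\sqsubseteq\overline{y}$; $\overline{x}\sqcup\overline{\overline{x}}=\top$; $\cdot$ is associative with two-sided unit $1$, distributes over $\sqcup$ on both sides, and $\bot$ is a zero of $\cdot$; $x^{\smile\smile}=x$, $(xy)^{\smile}=y^{\smile}x^{\smile}$, $(x\sqcup y)^{\smile}=x^{\smile}\sqcup y^{\smile}$; $\overline{\overline{1}}=1$; $\overline{\overline{xy}}=\overline{\overline{x}}\,\overline{\overline{y}}$; $xy\sqcap z\sqsubseteq x(y\sqcap x^{\smile}z)$. A relation algebra is a Stone relation algebra with $\overline{\overline{x}}=x$ for all $x$; it is representable if it is isomorphic to an algebra of binary relations (on some base set) with the usual relational operations (union, intersection, complement, relational composition, converse, empty relation, greatest relation, identity). An atom is an element $x\neq\bot$ such that $\bot\neq y\sqsubseteq x$ implies $y=x$. An element $x$ is a rectangle if $x\top x\sqsubseteq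 x$ and simple if $\top x\top=\top$. $S$ is atomic if every $x\neq\bot$ has an atom below it; atom-rectangular if every atom is a rectangle; atom-simple if every atom is simple. *)

(* Defs.v *)
From Stdlib Require Import List.
Import ListNotations.

Record StoneRA := {
  car :> Type;
  sup : car -> car -> car;
  inf : car -> car -> car;
  comp : car -> car -> car;
  pc : car -> car;
  conv : car -> car;
  bot : car;
  top : car;
  one : car;
  sup_assoc : forall x y z, sup x (sup y z) = sup (sup x y) z;
  inf_assoc : forall x y z, inf x (inf y z) = inf (inf x y) z;
  sup_comm : forall x y, sup x y = sup y x;
  inf_comm : forall x y, inf x y = inf y x;
  sup_absorb : forall x y, sup x (inf x y) = x;
  inf_absorb : forall x y, inf x (sup x y) = x;
  inf_sup_distr : forall x y z, inf x (sup y z) = sup (inf x y) (inf x z);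
  sup_bot : forall x, sup x bot = x;
  inf_top : forall x, inf x top = x;
  pc_spec : forall x y, inf x y = bot <-> sup x (pc y) = pc y;
  stone : forall x, sup (pc x) (pc (pc x)) = top;
  comp_assoc : forall x y z, comp x (comp y z) = comp (comp x y) z;
  comp_one_l : forall x, comp one x = x;
  comp_one_r : forall x, comp x one = x;
  comp_sup_l : forall x y z, comp (sup x y) z = sup (comp x z) (comp y z);
  comp_sup_r : forall x y z, comp x (sup y z) = sup (comp x y) (comp x z);
  comp_bot_l : forall x, comp bot x = bot;
  comp_bot_r : forall x, comp x bot = bot;
  conv_invol : forall x, conv (conv x) = x;
  conv_comp : forall x y, conv (comp x y) = comp (conv y) (conv x);
  conv_sup : forall x y, conv (sup x y) = sup (conv x) (conv y);
  pc_pc_one : pc (pc one) = one;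
  pc_pc_comp : forall x y, pc (pc (comp x y)) = comp (pc (pc x)) (pc (pc y));
  dedekind : forall x y z,
    sup (inf (comp x y) z) (comp x (inf y (comp (conv x) z))) =
    comp x (inf y (comp (conv x) z))
}.

Section Notions.
Variable S : StoneRA.

Definition le (x y : S) : Prop := sup S x y = y.

Definition atom (x : S) : Prop :=
  x <> bot S /\ forall y : S, y <> bot S -> le y x -> y = x.

Definition rectangle (x : S) : Prop := le (comp S (comp S x (top S)) x) x.

Definition simple (x : S) : Prop := comp S (comp S (top S) x) (top S) = top S.

Definition atomic : Prop :=
  forall x : S, x <> bot S -> exists a, atom a /\ le a x.

Definition atom_rectangular : Prop := forall a : S, atom a -> rectangle a.

Definition atom_simple : Prop := forall a : S, atom a -> simple a.

Definition finitely_many_atoms : Prop :=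
  exists l : list S, NoDup l /\ forall a, In a l <-> atom a.

Definition num_atoms_below (x : S) (n : nat) : Prop :=
  exists l : list S, NoDup l /\ (forall a, In a l <-> (atom a /\ le a x)) /\ length l = n.

Definition relation_algebra : Prop := forall x : S, pc S (pc S x) = x.

(* Representability: an injective homomorphism into the algebra of all binary
   relations on some base set X (relations are X -> X -> Prop; equality of
   relations is extensional). *)
Definition representation (X : Type) (f : S -> X -> X -> Prop) : Prop :=
  (forall x y a b, f (sup S x y) a b <-> (f x a b \/ f y a b)) /\
  (forall x y a b, f (inf S x y) a b <-> (f x a b /\ f y a b)) /\
  (forall x a b, f (pc S x) a b <-> ~ f x a b) /\
  (forall x y a b, f (comp S x y) a b <-> exists c, f x a c /\ f y c b) /\
  (forall x a b, f (conv S x) a b <-> f x b a) /\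
  (forall a b, ~ f (bot S) a b) /\
  (forall a b, f (top S) a b) /\
  (forall a b, f (one S) a b <-> a = b) /\
  (forall x y, (forall a b, f x a b <-> f y a b) -> x = y).

Definition representable : Prop :=
  exists (X : Type) (f : S -> X -> X -> Prop), representation X f.

End Notions.

(* Main.v *)
Require Import Defs.
From Stdlib Require Import List Classical ProofIrrelevance.
Import ListNotations.

Section Basic.
Variable S : StoneRA.
Local Notation "x ⊔ y" := (sup S x y) (at level 50, left associativity).
Local Notation "x ⊓ y" := (inf S x y) (at level 40, left associativity).
Local Notation "x ⋅ y" := (comp S x y) (at level 34, left associativity).
Local Notation "x ≤ y" := (le S x y) (at level 70).
Local Notation "x ˘" := (conv S x) (at level 20).
Local Notation "⊥" := (bot S).
Local Notation "⊤" := (top S).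
Local Notation "𝟏" := (one S).

Lemma sup_idem x : x ⊔ x = x.
Proof. transitivity (x ⊔ (x ⊓ (x ⊔ x))); [now rewrite inf_absorb | apply sup_absorb]. Qed.
Lemma inf_idem x : x ⊓ x = x.
Proof. transitivity (x ⊓ (x ⊔ (x ⊓ x))); [now rewrite sup_absorb | apply inf_absorb]. Qed.
Lemma le_refl x : x ≤ x.
Proof. apply sup_idem. Qed.
Lemma le_antisym x y : x ≤ y -> y ≤ x -> x = y.
Proof. unfold le; intros H1 H2. rewrite <- H2, sup_comm; exact H1. Qed.
Lemma le_trans x y z : x ≤ y -> y ≤ z -> x ≤ z.
Proof. unfold le; intros H1 H2. rewrite <- H2, sup_assoc, H1; reflexivity. Qed.
Lemma sup_ub_l x y : x ≤ x ⊔ y.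
Proof. unfold le. rewrite sup_assoc, sup_idem; reflexivity. Qed.
Lemma sup_ub_r x y : y ≤ x ⊔ y.
Proof. rewrite sup_comm; apply sup_ub_l. Qed.
Lemma sup_lub x y z : x ≤ z -> y ≤ z -> x ⊔ y ≤ z.
Proof. unfold le; intros H1 H2. rewrite <- sup_assoc, H2, H1; reflexivity. Qed.
Lemma le_inf x y : x ≤ y <-> x ⊓ y = x.
Proof.
  unfold le; split; intro H.
  - rewrite <- H; apply inf_absorb.
  - rewrite <- H, sup_comm, inf_comm; apply sup_absorb.
Qed.
Lemma inf_lb_l x y : x ⊓ y ≤ x.
Proof. apply le_inf. rewrite (inf_comm _ (x ⊓ y)), inf_assoc, inf_idem; reflexivity. Qed.
Lemma inf_lb_r x y : x ⊓ y ≤ y.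
Proof. rewrite inf_comm; apply inf_lb_l. Qed.
Lemma inf_glb x y z : z ≤ x -> z ≤ y -> z ≤ x ⊓ y.
Proof. rewrite !le_inf; intros H1 H2. rewrite inf_assoc, H1, H2; reflexivity. Qed.
Lemma bot_le x : ⊥ ≤ x.
Proof. unfold le. rewrite sup_comm; apply sup_bot. Qed.
Lemma le_top x : x ≤ ⊤.
Proof. apply le_inf, inf_top. Qed.
Lemma le_bot x : x ≤ ⊥ -> x = ⊥.
Proof. intro H; apply le_antisym; auto using bot_le. Qed.
Lemma sup_mono x x' y y' : x ≤ x' -> y ≤ y' -> x ⊔ y ≤ x' ⊔ y'.
Proof. intros; apply sup_lub; [eapply le_trans; [eassumption| apply sup_ub_l] | eapply le_trans; [eassumption| apply sup_ub_r]]. Qed.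
Lemma inf_mono x x' y y' : x ≤ x' -> y ≤ y' -> x ⊓ y ≤ x' ⊓ y'.
Proof. intros; apply inf_glb; [eapply le_trans; [apply inf_lb_l| eassumption] | eapply le_trans; [apply inf_lb_r| eassumption]]. Qed.
Lemma inf_bot x : x ⊓ ⊥ = ⊥.
Proof. apply le_bot, inf_lb_r. Qed.
Lemma comp_mono_r x y y' : y ≤ y' -> x ⋅ y ≤ x ⋅ y'.
Proof. unfold le; intro H. rewrite <- comp_sup_r, H; reflexivity. Qed.
Lemma comp_mono_l x x' y : x ≤ x' -> x ⋅ y ≤ x' ⋅ y.
Proof. unfold le; intro H. rewrite <- comp_sup_l, H; reflexivity. Qed.
Lemma comp_mono x x' y y' : x ≤ x' -> y ≤ y' -> x ⋅ y ≤ x' ⋅ y'.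
Proof. intros; eapply le_trans; [apply comp_mono_l; eauto | apply comp_mono_r; eauto]. Qed.
Lemma conv_mono x y : x ≤ y -> x˘ ≤ y˘.
Proof. unfold le; intro H. rewrite <- conv_sup, H; reflexivity. Qed.
Lemma conv_mono_rev x y : x˘ ≤ y˘ -> x ≤ y.
Proof. intro H. rewrite <- (conv_invol S x), <- (conv_invol S y). now apply conv_mono. Qed.
Lemma conv_bot : ⊥˘ = ⊥.
Proof. apply le_bot, conv_mono_rev. rewrite conv_invol; apply bot_le. Qed.
Lemma conv_top : ⊤˘ = ⊤.
Proof. apply le_antisym; [apply le_top|]. apply conv_mono_rev. rewrite conv_invol; apply le_top. Qed.
Lemma conv_one : 𝟏˘ = 𝟏.
Proof.
  assert (H : (𝟏˘ ⋅ 𝟏)˘ = 𝟏˘) by (rewrite conv_comp, conv_invol; apply comp_one_r).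
  rewrite comp_one_r, conv_invol in H. symmetry; exact H.
Qed.
Lemma conv_inf x y : (x ⊓ y)˘ = x˘ ⊓ y˘.
Proof.
  apply le_antisym.
  - apply inf_glb; apply conv_mono; [apply inf_lb_l | apply inf_lb_r].
  - assert (H : (x˘ ⊓ y˘)˘ ≤ x ⊓ y).
    { apply inf_glb; [rewrite <- (conv_invol S x) at 2 | rewrite <- (conv_invol S y) at 2]; apply conv_mono;
    [apply inf_lb_l | apply inf_lb_r]. }
    apply conv_mono in H. rewrite conv_invol in H. exact H.
Qed.
Lemma comp_bot_le x y : x ≤ ⊥ -> x ⋅ y = ⊥.
Proof. intro H; apply le_bot in H; subst; apply comp_bot_l. Qed.

Lemma pc_le x y : x ≤ pc S y <-> x ⊓ y = ⊥.
Proof. split; apply pc_spec. Qed.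
Lemma inf_pc x : x ⊓ pc S x = ⊥.
Proof. rewrite inf_comm; apply pc_le, le_refl. Qed.
Lemma le_pcpc x : x ≤ pc S (pc S x).
Proof. apply pc_le, inf_pc. Qed.
Lemma pc_anti x y : x ≤ y -> pc S y ≤ pc S x.
Proof. intro H; apply pc_le, le_bot. eapply le_trans; [apply inf_mono; [apply le_refl| exact H]|].
  rewrite inf_comm, inf_pc; apply le_refl. Qed.
Lemma pcpc_mono x y : x ≤ y -> pc S (pc S x) ≤ pc S (pc S y).
Proof. intro; now do 2 apply pc_anti. Qed.
Lemma pc_top : pc S ⊤ = ⊥.
Proof. rewrite <- (inf_top S (pc S ⊤)), inf_comm. apply inf_pc. Qed.
Lemma pc_bot : pc S ⊥ = ⊤.
Proof. apply le_antisym; [apply le_top|]. apply pc_le, inf_bot. Qed.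
Lemma pcpc_top : pc S (pc S ⊤) = ⊤.
Proof. rewrite pc_top; apply pc_bot. Qed.

Lemma ded x y z : x ⋅ y ⊓ z ≤ x ⋅ (y ⊓ x˘ ⋅ z).
Proof. apply dedekind. Qed.
Lemma ded_r x y z : x ⋅ y ⊓ z ≤ (x ⊓ z ⋅ y˘) ⋅ y.
Proof.
  apply conv_mono_rev. rewrite conv_inf, !conv_comp, conv_inf, conv_comp, conv_invol.
  generalize (ded (y˘) (x˘) (z˘)). rewrite conv_invol. exact (fun h => h).
Qed.

Lemma sub_conv_le p : p ≤ 𝟏 -> p˘ ≤ 𝟏.
Proof. intro H; rewrite <- conv_one; now apply conv_mono. Qed.
Lemma sub_l p x : p ≤ 𝟏 -> p ⋅ x ≤ x.
Proof. intro H. rewrite <- (comp_one_l S x) at 2. now apply comp_mono_l. Qed.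
Lemma sub_r p x : p ≤ 𝟏 -> x ⋅ p ≤ x.
Proof. intro H. rewrite <- (comp_one_r S x) at 2. now apply comp_mono_r. Qed.
Lemma sub_le_conv p : p ≤ 𝟏 -> p ≤ p˘.
Proof.
  intro H. eapply le_trans; [|eapply le_trans; [apply (ded p 𝟏 p)|]].
  - rewrite comp_one_r. apply inf_glb; apply le_refl.
  - eapply le_trans; [apply comp_mono_r, inf_lb_r|].
    eapply le_trans; [apply sub_l; exact H|]. apply sub_r; exact H.
Qed.
Lemma sub_conv p : p ≤ 𝟏 -> p˘ = p.
Proof.
  intro H. apply le_antisym; [|now apply sub_le_conv].
  rewrite <- (conv_invol S p) at 2. apply sub_le_conv, sub_conv_le, H.
Qed.
Lemma sub_idem p : p ≤ 𝟏 -> p ⋅ p = p.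
Proof.
  intro H. apply le_antisym; [now apply sub_l|].
  eapply le_trans; [|eapply le_trans; [apply (ded p 𝟏 p)|]].
  - rewrite comp_one_r. apply inf_glb; apply le_refl.
  - apply comp_mono_r. eapply le_trans; [apply inf_lb_r|]. rewrite sub_conv by exact H.
    now apply sub_l.
Qed.
Lemma sub_left p x : p ≤ 𝟏 -> x ≤ p ⋅ ⊤ -> p ⋅ x = x.
Proof.
  intros H Hx. apply le_antisym; [now apply sub_l|].
  eapply le_trans; [|eapply le_trans; [apply (ded p ⊤ x)|]].
  - apply inf_glb; [exact Hx | apply le_refl].
  - apply comp_mono_r. eapply le_trans; [apply inf_lb_r|]. apply sub_l, sub_conv_le, H.
Qed.
Lemma sub_right p x : p ≤ 𝟏 -> x ≤ ⊤ ⋅ p -> x ⋅ p = x.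
Proof.
  intros H Hx. apply le_antisym; [now apply sub_r|].
  eapply le_trans; [|eapply le_trans; [apply (ded_r ⊤ p x)|]].
  - apply inf_glb; [exact Hx | apply le_refl].
  - apply comp_mono_l. eapply le_trans; [apply inf_lb_r|]. apply sub_r, sub_conv_le, H.
Qed.
Lemma sub_comp_meet p q : p ≤ 𝟏 -> q ≤ 𝟏 -> p ⋅ q ≤ p ⊓ q.
Proof. intros; apply inf_glb; [now apply sub_r | now apply sub_l]. Qed.
Lemma sub_top_l p : p ≤ 𝟏 -> p ⋅ ⊤ ⊓ 𝟏 ≤ p.
Proof.
  intro H. eapply le_trans; [apply ded|]. eapply le_trans; [apply comp_mono_r, inf_lb_r|].
  rewrite comp_one_r. apply sub_r, sub_conv_le, H.
Qed.
Lemma top_top : ⊤ ⋅ ⊤ = ⊤.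
Proof. apply le_antisym; [apply le_top|]. rewrite <- (comp_one_l S ⊤) at 1. apply comp_mono_l, le_top. Qed.

End Basic.

Lemma NoDup_prod {A B} (l : list A) (l' : list B) : NoDup l -> NoDup l' -> NoDup (list_prod l l').
Proof.
  intros H1 H2. induction l as [|a l IH]; simpl; [constructor|].
  inversion H1; subst. apply NoDup_app; auto.
  - clear -H2. induction l' as [|b l' IH']; simpl; [constructor|]. inversion H2; subst.
    constructor; auto. intro Hin. apply in_map_iff in Hin. destruct Hin as [c [Hc Hc']].
    inversion Hc; subst; contradiction.
  - intros [x y] Hin Hin'. apply in_map_iff in Hin. destruct Hin as [c [Hc _]]. inversion Hc; subst.
    apply in_prod_iff in Hin'. destruct Hin'; contradiction.
Qed.

Lemma pick {A B} (R : A -> B -> Prop) (ps : list A) :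
  NoDup ps -> (forall x, In x ps -> exists b, R x b) ->
  (forall x y b, R x b -> R y b -> x = y) ->
  exists l, NoDup l /\ length l = length ps /\ (forall b, In b l -> exists x, In x ps /\ R x b) /\
     (forall x b b', In b l -> In b' l -> R x b -> R x b' -> b = b').
Proof.
  intros Hnd Hex Hdisj. induction ps as [|x ps IH].
  - exists []. split; [constructor|]. split; [reflexivity|]. split; intros; simpl in *; contradiction.
  - inversion Hnd; subst.
    destruct IH as [l [Hl1 [Hl2 [Hl3 Hl4]]]]; auto.
    { intros; apply Hex; right; auto. }
    destruct (Hex x (or_introl eq_refl)) as [b Hb].
    exists (b :: l). split.
    { constructor; auto. intro Hin. destruct (Hl3 b Hin) as [y [Hy Hyb]].
      rewrite (Hdisj _ _ _ Hb Hyb) in H1; contradiction. }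
    split; [simpl; congruence|]. split.
    + intros b' [<-|Hin]; [exists x; split; [left|]; auto|].
      destruct (Hl3 _ Hin) as [y [? ?]]; exists y; split; [right|]; auto.
    + intros z c c' [<-|Hc] [<-|Hc'] Hzc Hzc'; auto.
      * destruct (Hl3 _ Hc') as [y [Hy Hyc]].
        pose proof (Hdisj _ _ _ Hzc Hb). pose proof (Hdisj _ _ _ Hzc' Hyc). subst. contradiction.
      * destruct (Hl3 _ Hc) as [y [Hy Hyc]].
        pose proof (Hdisj _ _ _ Hzc' Hb). pose proof (Hdisj _ _ _ Hzc Hyc). subst. contradiction.
      * eapply Hl4; eauto.
Qed.

Lemma sublist {A} (Q : A -> Prop) (l : list A) : exists l', forall a, In a l' <-> In a l /\ Q a.
Proof.
  induction l as [|x l [l' IH]].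
  - exists []. simpl; tauto.
  - destruct (classic (Q x)).
    + exists (x :: l'). intro a. simpl. rewrite IH. split; [intros [<-|[? ?]]; auto| intros [[<-|?] ?]; auto].
    + exists l'. intro a. simpl. rewrite IH. split; [intros [? ?]; auto| intros [[<-|?] ?]; [contradiction|auto]].
Qed.

Section Atoms.
Variable S : StoneRA.
Local Notation "x ⊔ y" := (sup S x y) (at level 50, left associativity).
Local Notation "x ⊓ y" := (inf S x y) (at level 40, left associativity).
Local Notation "x ⋅ y" := (comp S x y) (at level 34, left associativity).
Local Notation "x ≤ y" := (le S x y) (at level 70).
Local Notation "x ˘" := (conv S x) (at level 20).
Local Notation "⊥" := (bot S).
Local Notation "⊤" := (top S).
Local Notation "𝟏" := (one S).

Lemma atom_meet a x : atom S a -> a ⊓ x = ⊥ \/ a ≤ x.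
Proof.
  intros [Hne Hmin]. destruct (classic (a ⊓ x = ⊥)); [left; auto|right].
  apply le_inf. apply Hmin; auto. apply inf_lb_l.
Qed.
Lemma atom_sup a x y : atom S a -> a ≤ x ⊔ y -> a ≤ x \/ a ≤ y.
Proof.
  intros Ha H. destruct (atom_meet a x Ha) as [H1|H1]; auto.
  destruct (atom_meet a y Ha) as [H2|H2]; auto.
  exfalso. apply (proj1 Ha). apply le_inf in H. rewrite inf_sup_distr, H1, H2, sup_bot in H.
  auto.
Qed.
Lemma atom_disj a b : atom S a -> atom S b -> a <> b -> a ⊓ b = ⊥.
Proof.
  intros Ha Hb Hab. destruct (atom_meet a b Ha) as [H|H]; auto.
  exfalso. apply Hab. apply (proj2 Hb); auto. apply Ha.
Qed.
Lemma atom_not_le_bot a : atom S a -> ~ a ≤ ⊥.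
Proof. intros Ha H. apply (proj1 Ha), le_bot, H. Qed.

Definition join (l : list S) := fold_right (sup S) ⊥ l.
Lemma in_join_le a l : In a l -> a ≤ join l.
Proof.
  induction l as [|b l IH]; simpl; [tauto|]. intros [<-|H]; [apply sup_ub_l|].
  eapply le_trans; [apply IH, H| apply sup_ub_r].
Qed.
Lemma inf_join_le l x y : (forall a, In a l -> x ⊓ a ≤ y) -> x ⊓ join l ≤ y.
Proof.
  induction l as [|b l IH]; simpl; intro H.
  - rewrite inf_bot; apply bot_le.
  - rewrite inf_sup_distr. apply sup_lub; auto.
Qed.
Lemma atom_join_l a l y : atom S a -> a ≤ join l ⋅ y -> exists b, In b l /\ a ≤ b ⋅ y.
Proof.
  intro Ha. induction l as [|b l IH]; simpl; intro H.
  - rewrite comp_bot_l in H. exfalso; eapply atom_not_le_bot; eauto.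
  - rewrite comp_sup_l in H. destruct (atom_sup _ _ _ Ha H) as [H'|H'].
    + exists b; auto.
    + destruct (IH H') as [c [? ?]]; exists c; auto.
Qed.
Lemma atom_join_r a l x : atom S a -> a ≤ x ⋅ join l -> exists b, In b l /\ a ≤ x ⋅ b.
Proof.
  intro Ha. induction l as [|b l IH]; simpl; intro H.
  - rewrite comp_bot_r in H. exfalso; eapply atom_not_le_bot; eauto.
  - rewrite comp_sup_r in H. destruct (atom_sup _ _ _ Ha H) as [H'|H'].
    + exists b; auto.
    + destruct (IH H') as [c [? ?]]; exists c; auto.
Qed.
Lemma sub_top_r q : q ≤ 𝟏 -> ⊤ ⋅ q ⊓ 𝟏 ≤ q.
Proof.
  intro H. eapply le_trans; [apply ded_r|]. eapply le_trans; [apply comp_mono_l, inf_lb_r|].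
  rewrite comp_one_l. apply sub_l, sub_conv_le, H.
Qed.
End Atoms.

Section Main.
Variable S : StoneRA.
Local Notation "x ⊔ y" := (sup S x y) (at level 50, left associativity).
Local Notation "x ⊓ y" := (inf S x y) (at level 40, left associativity).
Local Notation "x ⋅ y" := (comp S x y) (at level 34, left associativity).
Local Notation "x ≤ y" := (le S x y) (at level 70).
Local Notation "x ˘" := (conv S x) (at level 20).
Local Notation "⊥" := (bot S).
Local Notation "⊤" := (top S).
Local Notation "𝟏" := (one S).

Variables (P L : list S).
Hypothesis Hsimple : atom_simple S.
Hypothesis Hat : forall x, x <> ⊥ -> exists a, atom S a /\ a ≤ x.
Hypothesis HP : forall p, In p P <-> atom S p /\ p ≤ 𝟏.
Hypothesis HPnd : NoDup P.
Hypothesis HL : forall a, In a L <-> atom S a /\ a ≤ ⊤.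
Hypothesis HLlen : length L = length P * length P.

Lemma P_sub p : In p P -> p ≤ 𝟏.
Proof. intro H; apply HP, H. Qed.
Lemma P_atom p : In p P -> atom S p.
Proof. intro H; apply HP, H. Qed.

Lemma ptq_ne p q : In p P -> In q P -> p ⋅ ⊤ ⋅ q <> ⊥.
Proof.
  intros Hp Hq H.
  assert (E : ⊤ ⋅ (p ⋅ ⊤ ⋅ q) ⋅ ⊤ = ⊤).
  { rewrite !comp_assoc. rewrite (Hsimple p (P_atom p Hp)). apply (Hsimple q (P_atom q Hq)). }
  rewrite H, comp_bot_r, comp_bot_l in E.
  apply (atom_not_le_bot S p (P_atom p Hp)). rewrite E. apply le_top.
Qed.

Lemma ptq_le_l p q : In q P -> p ⋅ ⊤ ⋅ q ≤ p ⋅ ⊤.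
Proof. intro Hq. apply sub_r, P_sub, Hq. Qed.
Lemma ptq_le_r p q : In p P -> p ⋅ ⊤ ⋅ q ≤ ⊤ ⋅ q.
Proof. intro Hp. rewrite <- comp_assoc. apply sub_l, P_sub, Hp. Qed.

Lemma ptq_disj p q p' q' : In p P -> In q P -> In p' P -> In q' P -> (p, q) <> (p', q') ->
  p ⋅ ⊤ ⋅ q ⊓ p' ⋅ ⊤ ⋅ q' = ⊥.
Proof.
  intros Hp Hq Hp' Hq' Hne.
  assert (Hz1 : p ⋅ ⊤ ⋅ q ⊓ p' ⋅ ⊤ ⋅ q' ≤ p ⋅ ⊤ ⋅ q) by apply inf_lb_l.
  assert (Hz2 : p ⋅ ⊤ ⋅ q ⊓ p' ⋅ ⊤ ⋅ q' ≤ p' ⋅ ⊤ ⋅ q') by apply inf_lb_r.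
  set (z := p ⋅ ⊤ ⋅ q ⊓ p' ⋅ ⊤ ⋅ q') in *.
  apply le_bot. destruct (classic (p = p')) as [Epp|Epp].
  - subst p'. assert (Hqq : q <> q') by congruence.
    pose proof (atom_disj S q' q (P_atom _ Hq') (P_atom _ Hq) (not_eq_sym Hqq)) as Hd.
    assert (H1 : z ⋅ q = z) by (apply sub_right; [apply P_sub; auto| eapply le_trans; [exact Hz1| apply ptq_le_r; auto]]).
    assert (H2 : z ⋅ q' = z) by (apply sub_right; [apply P_sub; auto| eapply le_trans; [exact Hz2| apply ptq_le_r; auto]]).
    assert (E : z = z ⋅ (q' ⋅ q)) by (rewrite comp_assoc, H2, H1; reflexivity).
    rewrite E. eapply le_trans; [apply comp_mono_r, sub_comp_meet; apply P_sub; auto|].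
    rewrite Hd, comp_bot_r. apply le_refl.
  - pose proof (atom_disj S p p' (P_atom _ Hp) (P_atom _ Hp') Epp) as Hd.
    assert (H1 : p ⋅ z = z) by (apply sub_left; [apply P_sub; auto| eapply le_trans; [exact Hz1| apply ptq_le_l; auto]]).
    assert (H2 : p' ⋅ z = z) by (apply sub_left; [apply P_sub; auto| eapply le_trans; [exact Hz2| apply ptq_le_l; auto]]).
    assert (E : z = (p ⋅ p') ⋅ z) by (rewrite <- comp_assoc, H2, H1; reflexivity).
    rewrite E. eapply le_trans; [apply comp_mono_l, sub_comp_meet; apply P_sub; auto|].
    rewrite Hd, comp_bot_l. apply le_refl.
Qed.

Definition Rel (x : S * S) (b : S) :=
  In (fst x) P /\ In (snd x) P /\ atom S b /\ b ≤ fst x ⋅ ⊤ ⋅ snd x.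

Lemma count : exists l, NoDup l /\ length l = length (list_prod P P) /\
  (forall b, In b l -> exists x, In x (list_prod P P) /\ Rel x b) /\
  (forall x b b', In b l -> In b' l -> Rel x b -> Rel x b' -> b = b').
Proof.
  apply pick.
  - apply NoDup_prod; auto.
  - intros [p q] Hx. apply in_prod_iff in Hx. destruct Hx as [Hp Hq].
    destruct (Hat _ (ptq_ne p q Hp Hq)) as [b [Hb Hb']]. exists b. exact (conj Hp (conj Hq (conj Hb Hb'))).
  - intros [p q] [p' q'] b [Hp [Hq [Hb Hb1]]] [Hp' [Hq' [_ Hb2]]]. simpl in *.
    destruct (classic ((p, q) = (p', q'))) as [E|E]; auto. exfalso.
    apply (atom_not_le_bot S b Hb). rewrite <- (ptq_disj p q p' q'); auto. apply inf_glb; auto.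
Qed.

Lemma atom_ptq a : atom S a -> exists p q, In p P /\ In q P /\ a ≤ p ⋅ ⊤ ⋅ q.
Proof.
  intro Ha. destruct count as [l [Hnd [Hlen [H3 H4]]]].
  assert (Hinc : incl L l).
  { apply NoDup_length_incl; auto.
    - rewrite Hlen, length_prod, HLlen. auto.
    - intros b Hb. destruct (H3 b Hb) as [x [_ [_ [_ [Hb' _]]]]]. apply HL; split; auto. apply le_top. }
  assert (HaL : In a L) by (apply HL; split; auto; apply le_top).
  destruct (H3 a (Hinc a HaL)) as [[p q] [_ [Hp [Hq [_ Ha']]]]]. exists p, q; auto.
Qed.

Lemma ptq_unique p q b b' : In p P -> In q P -> atom S b -> atom S b' ->
  b ≤ p ⋅ ⊤ ⋅ q -> b' ≤ p ⋅ ⊤ ⋅ q -> b = b'.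
Proof.
  intros Hp Hq Hb Hb' H1 H2. destruct count as [l [Hnd [Hlen [H3 H4]]]].
  assert (Hinc : incl L l).
  { apply NoDup_length_incl; auto.
    - rewrite Hlen, length_prod, HLlen. auto.
    - intros c Hc. destruct (H3 c Hc) as [x [_ [_ [_ [Hc' _]]]]]. apply HL; split; auto. apply le_top. }
  apply (H4 (p, q)); try (apply Hinc, HL; split; auto; apply le_top).
  - exact (conj Hp (conj Hq (conj Hb H1))).
  - exact (conj Hp (conj Hq (conj Hb' H2))).
Qed.

Lemma pTp p : In p P -> p ⋅ ⊤ ⋅ p = p.
Proof.
  intro Hp. pose proof (P_sub p Hp) as Hp1. pose proof (P_atom p Hp) as Hpa.
  assert (Hle : p ≤ p ⋅ ⊤ ⋅ p).
  { rewrite <- (sub_idem S p Hp1) at 1. rewrite <- (sub_idem S p Hp1) at 1.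
    apply comp_mono_l, comp_mono_r, le_top. }
  apply le_antisym; auto.
  assert (H1 : p ⋅ ⊤ ⋅ p ≤ pc S (pc S p)).
  { apply pc_le. destruct (classic (p ⋅ ⊤ ⋅ p ⊓ pc S p = ⊥)) as [E|E]; auto. exfalso.
    destruct (Hat _ E) as [b [Hb Hb']].
    assert (Eb : b = p).
    { apply (ptq_unique p p b p); auto. eapply le_trans; [exact Hb'| apply inf_lb_l]. }
    subst b. apply (proj1 Hpa). rewrite <- (inf_idem S p). apply pc_le.
    eapply le_trans; [exact Hb'| apply inf_lb_r]. }
  assert (H2 : p ⋅ ⊤ ⋅ p ≤ 𝟏).
  { eapply le_trans; [exact H1|]. rewrite <- (pc_pc_one S). apply pcpc_mono, Hp1. }
  eapply le_trans; [|apply (sub_top_l S p Hp1)]. apply inf_glb; auto. apply ptq_le_l; auto.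
Qed.

Lemma p_reg p : In p P -> pc S (pc S p) = p.
Proof.
  intro Hp. pose proof (P_sub p Hp) as Hp1. pose proof (P_atom p Hp) as Hpa.
  set (r := pc S (pc S p)).
  assert (Hpr : p ≤ r) by apply le_pcpc.
  assert (Hr1 : r ≤ 𝟏) by (unfold r; rewrite <- (pc_pc_one S); apply pcpc_mono, Hp1).
  assert (Hrr : r ⋅ ⊤ ⋅ r = r).
  { unfold r. rewrite <- pcpc_top, <- !pc_pc_comp, pTp; auto. }
  assert (H1 : p ⋅ ⊤ ⋅ r ≤ p).
  { eapply le_trans; [|apply (sub_top_l S p Hp1)]. apply inf_glb.
    - apply sub_r, Hr1.
    - eapply le_trans; [apply comp_mono_l, comp_mono_l, Hpr|]. rewrite Hrr. exact Hr1. }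
  assert (H2 : r ⋅ ⊤ ⋅ p ≤ p).
  { apply conv_mono_rev. rewrite !conv_comp, conv_top, !sub_conv; auto.
    rewrite comp_assoc. exact H1. }
  apply le_antisym; auto.
  rewrite <- Hrr. rewrite <- (Hsimple p Hpa). rewrite !comp_assoc.
  eapply le_trans; [|exact H2].
  assert (E: r⋅⊤⋅p⋅⊤⋅r = r⋅⊤⋅(p⋅⊤⋅r)) by (rewrite !comp_assoc; reflexivity).
  rewrite E. apply comp_mono_r, H1.
Qed.


Lemma atom_is_ptq a p q : atom S a -> In p P -> In q P -> a ≤ p ⋅ ⊤ ⋅ q -> a = p ⋅ ⊤ ⋅ q.
Proof.
  intros Ha Hp Hq H.
  assert (Hl : p ⋅ a = a) by (apply sub_left; [apply P_sub; auto| eapply le_trans; [exact H| apply ptq_le_l; auto]]).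
  assert (Hr : a ⋅ q = a) by (apply sub_right; [apply P_sub; auto| eapply le_trans; [exact H| apply ptq_le_r; auto]]).
  assert (E1 : p ⋅ ⊤ ⋅ a = a).
  { rewrite <- Hl. rewrite comp_assoc, pTp; auto. }
  assert (E2 : a ⋅ ⊤ ⋅ q = a).
  { transitivity (a ⋅ (q ⋅ ⊤ ⋅ q)).
    - rewrite <- Hr at 1. rewrite !comp_assoc; reflexivity.
    - rewrite pTp; auto. }
  assert (E3 : p ⋅ (⊤ ⋅ a ⋅ ⊤) ⋅ q = p ⋅ ⊤ ⋅ q) by (rewrite (Hsimple a Ha); reflexivity).
  rewrite <- E3, !comp_assoc, E1, E2. reflexivity.
Qed.

Lemma ptq_atom p q : In p P -> In q P -> atom S (p ⋅ ⊤ ⋅ q).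
Proof.
  intros Hp Hq. destruct (Hat _ (ptq_ne p q Hp Hq)) as [b [Hb Hb']].
  rewrite <- (atom_is_ptq b p q); auto.
Qed.

Lemma atom_rect a : atom S a -> rectangle S a.
Proof.
  intro Ha. destruct (atom_ptq a Ha) as [p [q [Hp [Hq H]]]].
  unfold rectangle. rewrite (atom_is_ptq a p q Ha Hp Hq H).
  eapply le_trans with (y := p ⋅ (⊤ ⋅ q ⋅ ⊤ ⋅ p ⋅ ⊤) ⋅ q).
  - rewrite !comp_assoc. apply le_refl.
  - apply comp_mono_l, comp_mono_r, le_top.
Qed.

Lemma atom_reg a : atom S a -> pc S (pc S a) = a.
Proof.
  intro Ha. destruct (atom_ptq a Ha) as [p [q [Hp [Hq H]]]].
  rewrite (atom_is_ptq a p q Ha Hp Hq H).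
  rewrite !pc_pc_comp, pcpc_top, !p_reg; auto.
Qed.

Definition zl (l : list S) := fold_right (fun a acc => pc S a ⊓ acc) ⊤ l.

Lemma zl_le l a : In a l -> zl l ≤ pc S a.
Proof.
  induction l as [|b l IH]; simpl; [tauto|]. intros [<-|H]; [apply inf_lb_l|].
  eapply le_trans; [apply inf_lb_r| apply IH, H].
Qed.

Lemma iter l : (forall a, In a l -> pc S (pc S a) = a) -> ⊤ ≤ join S l ⊔ zl l.
Proof.
  induction l as [|a l IH]; simpl; intro Hreg.
  - apply sup_ub_r.
  - assert (IH' : ⊤ ≤ join S l ⊔ zl l) by (apply IH; auto).
    set (z := zl l) in *.
    assert (Hz : z ≤ (pc S a ⊓ z) ⊔ a).
    { rewrite <- (inf_top S z) at 1. rewrite <- (stone S a), Hreg by (left; auto).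
      rewrite inf_sup_distr. apply sup_mono; [rewrite inf_comm; apply le_refl| apply inf_lb_r]. }
    eapply le_trans; [exact IH'|]. apply sup_lub.
    + eapply le_trans; [|apply sup_ub_l]. apply sup_ub_r.
    + eapply le_trans; [exact Hz|]. apply sup_lub; [apply sup_ub_r|].
      eapply le_trans; [|apply sup_ub_l]. apply sup_ub_l.
Qed.

Lemma top_join : ⊤ ≤ join S L.
Proof.
  assert (H : ⊤ ≤ join S L ⊔ zl L) by (apply iter; intros a Ha; apply atom_reg, HL, Ha).
  assert (Hz : zl L = ⊥).
  { destruct (classic (zl L = ⊥)) as [E|E]; auto. exfalso.
    destruct (Hat _ E) as [b [Hb Hb']].
    assert (HbL : In b L) by (apply HL; split; auto; apply le_top).
    apply (proj1 Hb). rewrite <- (inf_idem S b). apply pc_le.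
    eapply le_trans; [exact Hb'| apply zl_le, HbL]. }
  rewrite Hz, sup_bot in H. exact H.
Qed.

Lemma le_by_atoms x y : (forall a, atom S a -> a ≤ x -> a ≤ y) -> x ≤ y.
Proof.
  intro H. eapply le_trans with (y := x ⊓ join S L).
  - apply inf_glb; [apply le_refl|]. eapply le_trans; [apply le_top| apply top_join].
  - apply inf_join_le. intros a Ha. apply HL in Ha. destruct Ha as [Ha _].
    destruct (atom_meet S a x Ha) as [E|E].
    + rewrite inf_comm, E. apply bot_le.
    + eapply le_trans; [apply inf_lb_r| auto].
Qed.

Lemma rel_alg : relation_algebra S.
Proof.
  intro x. apply le_antisym; [|apply le_pcpc].
  apply le_by_atoms. intros a Ha H.
  destruct (atom_meet S a x Ha) as [E|E]; auto. exfalso.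
  apply (atom_not_le_bot S a Ha). rewrite <- (inf_pc S (pc S x)).
  apply inf_glb; auto. apply pc_le; exact E.
Qed.

Definition PX := {p : S | In p P}.
Definition rep (x : S) (p q : PX) : Prop := proj1_sig p ⋅ ⊤ ⋅ proj1_sig q ≤ x.

Lemma conv_ptq p q : In p P -> In q P -> (p ⋅ ⊤ ⋅ q)˘ = q ⋅ ⊤ ⋅ p.
Proof.
  intros Hp Hq. rewrite !conv_comp, conv_top, !sub_conv by (apply P_sub; auto).
  rewrite comp_assoc. reflexivity.
Qed.

Lemma sub_atoms x : exists lx, forall a, In a lx <-> In a L /\ a ≤ x.
Proof. apply sublist. Qed.

Lemma le_join_atoms x lx : (forall a, In a lx <-> In a L /\ a ≤ x) -> x ≤ join S lx.
Proof.
  intro H. apply le_by_atoms. intros a Ha Hax. apply in_join_le, H. split; auto.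
  apply HL; split; auto; apply le_top.
Qed.

Lemma representable_S : representable S.
Proof.
  exists PX, rep. unfold representation, rep.
  split; [|split; [|split; [|split; [|split; [|split; [|split; [|split]]]]]]].
  - intros x y [p Hp] [q Hq]; simpl. split.
    + intro H. apply atom_sup; auto. apply ptq_atom; auto.
    + intros [H|H]; eapply le_trans; eauto; [apply sup_ub_l| apply sup_ub_r].
  - intros x y [p Hp] [q Hq]; simpl. split.
    + intro H; split; eapply le_trans; eauto; [apply inf_lb_l| apply inf_lb_r].
    + intros [H1 H2]; apply inf_glb; auto.
  - intros x [p Hp] [q Hq]; simpl. pose proof (ptq_atom p q Hp Hq) as Ha. split.
    + intros H1 H2. apply (atom_not_le_bot S _ Ha). rewrite <- (inf_pc S x). apply inf_glb; auto.
    + intro H. destruct (atom_meet S _ x Ha) as [E|E]; [apply pc_le; exact E| contradiction].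
  - intros x y [p Hp] [q Hq]; simpl. pose proof (ptq_atom p q Hp Hq) as Ha. split.
    + intro H.
      destruct (sub_atoms x) as [lx Hlx]. destruct (sub_atoms y) as [ly Hly].
      assert (H' : p ⋅ ⊤ ⋅ q ≤ join S lx ⋅ join S ly).
      { eapply le_trans; [exact H|]. apply comp_mono; apply le_join_atoms; auto. }
      destruct (atom_join_l S _ _ _ Ha H') as [b [Hb Hb']].
      destruct (atom_join_r S _ _ _ Ha Hb') as [c [Hc Hc']].
      apply Hlx in Hb. destruct Hb as [HbL Hbx]. apply Hly in Hc. destruct Hc as [HcL Hcy].
      apply HL in HbL. destruct HbL as [Hba _]. apply HL in HcL. destruct HcL as [Hca _].
      destruct (atom_ptq b Hba) as [p1 [c1 [Hp1 [Hc1 Hb1]]]].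
      destruct (atom_ptq c Hca) as [c2 [q2 [Hc2 [Hq2 Hc2']]]].
      rewrite (atom_is_ptq b p1 c1) in Hc', Hbx by auto.
      rewrite (atom_is_ptq c c2 q2) in Hc', Hcy by auto.
      destruct (classic (c1 = c2)) as [E|E].
      * subst c2.
        assert (Hpq : p ⋅ ⊤ ⋅ q ≤ p1 ⋅ ⊤ ⋅ q2).
        { eapply le_trans; [exact Hc'|].
          eapply le_trans with (y := p1 ⋅ (⊤ ⋅ c1 ⋅ c1 ⋅ ⊤) ⋅ q2).
          - rewrite !comp_assoc. apply le_refl.
          - apply comp_mono_l, comp_mono_r, le_top. }
        destruct (classic ((p, q) = (p1, q2))) as [E2|E2].
        -- inversion E2; subst. exists (exist _ c1 Hc1). simpl. auto.
        -- exfalso. apply (atom_not_le_bot S _ Ha).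
           rewrite <- (ptq_disj p q p1 q2); auto. apply inf_glb; auto. apply le_refl.
      * exfalso. apply (atom_not_le_bot S _ Ha).
        eapply le_trans; [exact Hc'|].
        assert (E3 : c1 ⋅ c2 = ⊥).
        { apply le_bot. eapply le_trans; [apply sub_comp_meet; apply P_sub; auto|].
          rewrite (atom_disj S c1 c2); [apply le_refl| apply P_atom; auto| apply P_atom; auto| auto]. }
        assert (E4 : p1 ⋅ ⊤ ⋅ c1 ⋅ (c2 ⋅ ⊤ ⋅ q2) = p1 ⋅ ⊤ ⋅ (c1 ⋅ c2) ⋅ ⊤ ⋅ q2) by (rewrite !comp_assoc; reflexivity).
        rewrite E4, E3, comp_bot_r, !comp_bot_l. apply le_refl.
    + intros [[c Hc] [H1 H2]]; simpl in *.
      eapply le_trans; [|apply comp_mono; [exact H1| exact H2]].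
      assert (E : p ⋅ ⊤ ⋅ q = p ⋅ (⊤ ⋅ (c ⋅ c) ⋅ ⊤) ⋅ q).
      { rewrite sub_idem by (apply P_sub; auto). rewrite (Hsimple c (P_atom c Hc)). reflexivity. }
      rewrite E, !comp_assoc. apply le_refl.
  - intros x [p Hp] [q Hq]; simpl. split.
    + intro H. rewrite <- (conv_invol S x). rewrite <- conv_ptq by auto. apply conv_mono, H.
    + intro H. rewrite <- (conv_invol S (p ⋅ ⊤ ⋅ q)), conv_ptq by auto. apply conv_mono, H.
  - intros [p Hp] [q Hq]; simpl. intro H. apply (atom_not_le_bot S _ (ptq_atom p q Hp Hq) H).
  - intros [p Hp] [q Hq]; simpl. apply le_top.
  - intros [p Hp] [q Hq]; simpl. split.
    + intro H.
      assert (H1 : p ⋅ ⊤ ⋅ q ≤ p) by (eapply le_trans; [|apply (sub_top_l S p (P_sub p Hp))];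
        apply inf_glb; auto; apply ptq_le_l; auto).
      assert (H2 : p ⋅ ⊤ ⋅ q ≤ q) by (eapply le_trans; [|apply (sub_top_r S q (P_sub q Hq))];
        apply inf_glb; auto; apply ptq_le_r; auto).
      destruct (classic (p = q)) as [E|E].
      * subst q. f_equal. apply proof_irrelevance.
      * exfalso. apply (atom_not_le_bot S _ (ptq_atom p q Hp Hq)).
        rewrite <- (atom_disj S p q (P_atom p Hp) (P_atom q Hq) E). apply inf_glb; auto.
    + intro E. inversion E; subst. rewrite pTp; auto. apply P_sub; auto.
  - intros x y H. apply le_antisym; apply le_by_atoms; intros a Ha Hax;
      destruct (atom_ptq a Ha) as [p [q [Hp [Hq Ha']]]];
      rewrite (atom_is_ptq a p q Ha Hp Hq Ha') in *;
      apply (H (exist _ p Hp) (exist _ q Hq)); auto.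
Qed.

End Main.

Theorem mainTheorem7 (S : StoneRA) (C : S -> nat)
  (Hsimple : atom_simple S)
  (Hfin : finitely_many_atoms S)
  (HC : forall x : S, num_atoms_below S x (C x))
  (HC0 : forall x : S, C x = 0 <-> x = bot S)
  (Htop : C (top S) = C (one S) * C (one S)) :
  atomic S /\ atom_rectangular S /\ relation_algebra S /\ representable S.
Proof.
  assert (Hat : atomic S).
  { intros x Hx. destruct (HC x) as [l [_ [Hl Hlen]]].
    destruct l as [|a l].
    - exfalso. apply Hx, HC0. simpl in Hlen. auto.
    - exists a. apply Hl. left; auto. }
  destruct (HC (one S)) as [P [HPnd [HP HPlen]]].
  destruct (HC (top S)) as [L [_ [HL HLlen]]].
  assert (HLlen' : length L = length P * length P) by (rewrite HLlen, HPlen; exact Htop).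
  split; [exact Hat|]. split; [|split].
  - intro a. apply (atom_rect S P L Hsimple Hat HP HPnd HL HLlen').
  - apply (rel_alg S P L Hsimple Hat HP HPnd HL HLlen').
  - apply (representable_S S P L Hsimple Hat HP HPnd HL HLlen').
Qed.
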